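(* Let $x_*\in\Omega$, $R>0$, $c:=\|F(x_* )\|$, $\beta:=\|F'(x_* )^\dagger\|$, $\kappa:=\sup\{t\in[0,R):B(x_*,t)\subset\Omega\}$. Suppose $F'(x_* )^*F(x_* )=0$, $F'(x_* )$ is injective, and there is $K>0$ with $\alpha:=\sqrt2c\beta^2K<1$ and $\|F'(x)-F'(y)\|\le K\|x-y\|$ for all $x,y\in B(x_*,\kappa)$. Take $0\le\omega_2<\omega_1$ with $\omega_1\alpha+\omega_2<1$ and let $$r:=\min\Big\{\kappa,\ \frac{2(1-\omega_2)-2\sqrt2cK\beta^2\omega_1}{\beta K(2+\omega_1-2\omega_2)}\Big\}.$$ Then for $x_0\in B(x_*,r)\setminus\{x_*\}$ the iteration $x_{k+1}=x_k+S_k$, $B(x_k)S_k=-F'(x_k)^*F(x_k)$, where each $B(x_k):\mathbb X\to\mathbb X$ is invertible bounded linear with $\|B(x_k)^{-1}F'(x_k)^*F'(x_k)\|\le\omega_1$ and $\|B(x_k)^{-1}F'(x_k)^*F'(x_k)-I\|\le\omega_2$, is well defined, contained in $B(x_*,r)$, converges to $x_*$, and for all $k\ge0$, $$\|x_{k+1}-x_*\|\le\frac{\beta\omega_1K}{2(1-\beta K\|x_0-x_*\|)}\|x_k-x_*\|^2+\Big(\frac{\omega_1\sqrt2c\beta^2K}{1-\beta K\|x_0-x_*\|}+\omega_2\Big)\|x_k-x_*\|.$$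
   Context: $\mathbb X,\mathbb Y$ are real or complex Hilbert spaces, $\Omega\subseteq\mathbb X$ is open, and $F:\Omega\to\mathbb Y$ is continuously differentiable with $F'(x)$ having closed image for every $x\in\Omega$. $A^*$ denotes the adjoint; for a continuous injective linear operator $A$ with closed image, $A^\dagger:=(A^*A)^{-1}A^*$. $B(a,\delta)$ is the open ball. *)

(* Defs.v *)
From Stdlib Require Import Reals ClassicalEpsilon.
Open Scope R_scope.

Record HilbertSpace := MkHilbert {
  hcar :> Type;
  hzero : hcar;
  hadd : hcar -> hcar -> hcar;
  hopp : hcar -> hcar;
  hscal : R -> hcar -> hcar;
  hinner : hcar -> hcar -> R;
  hadd_assoc : forall x y z, hadd x (hadd y z) = hadd (hadd x y) z;
  hadd_comm : forall x y, hadd x y = hadd y x;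
  hadd_0 : forall x, hadd hzero x = x;
  hadd_opp : forall x, hadd (hopp x) x = hzero;
  hscal_assoc : forall a b x, hscal a (hscal b x) = hscal (a * b) x;
  hscal_1 : forall x, hscal 1 x = x;
  hscal_distr_l : forall a x y, hscal a (hadd x y) = hadd (hscal a x) (hscal a y);
  hscal_distr_r : forall a b x, hscal (a + b) x = hadd (hscal a x) (hscal b x);
  hinner_sym : forall x y, hinner x y = hinner y x;
  hinner_add : forall x y z, hinner (hadd x y) z = hinner x z + hinner y z;
  hinner_scal : forall a x y, hinner (hscal a x) y = a * hinner x y;
  hinner_pos : forall x, 0 <= hinner x x;
  hinner_def : forall x, hinner x x = 0 -> x = hzero;
  hcomplete : forall u : nat -> hcar,
    (forall eps, eps > 0 -> exists N, forall m n, (N <= m)%nat -> (N <= n)%nat ->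
       sqrt (hinner (hadd (u m) (hopp (u n))) (hadd (u m) (hopp (u n)))) < eps) ->
    exists l, forall eps, eps > 0 -> exists N, forall n, (N <= n)%nat ->
       sqrt (hinner (hadd (u n) (hopp l)) (hadd (u n) (hopp l))) < eps
}.

Arguments hzero {h}.
Arguments hadd {h} _ _.
Arguments hopp {h} _.
Arguments hscal {h} _ _.
Arguments hinner {h} _ _.

Definition hsub {X : HilbertSpace} (x y : X) : X := hadd x (hopp y).
Definition hnorm {X : HilbertSpace} (x : X) : R := sqrt (hinner x x).

Definition ball {X : HilbertSpace} (a : X) (d : R) (x : X) : Prop :=
  hnorm (hsub x a) < d.

Definition is_open {X : HilbertSpace} (O : X -> Prop) : Prop :=
  forall x, O x -> exists d, d > 0 /\ forall y, ball x d y -> O y.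

Definition is_linear {X Y : HilbertSpace} (A : X -> Y) : Prop :=
  (forall x y, A (hadd x y) = hadd (A x) (A y)) /\
  (forall a x, A (hscal a x) = hscal a (A x)).

Definition is_bounded_linear {X Y : HilbertSpace} (A : X -> Y) : Prop :=
  is_linear A /\ exists M, forall x, hnorm (A x) <= M * hnorm x.

Definition opnorm {X Y : HilbertSpace} (A : X -> Y) : R :=
  epsilon (inhabits 0)
    (fun m => is_lub (fun t => exists x, hnorm x <= 1 /\ t = hnorm (A x)) m).

Definition adjoint {X Y : HilbertSpace} (A : X -> Y) : Y -> X :=
  fun y => epsilon (inhabits hzero) (fun z => forall x, hinner (A x) y = hinner x z).

(* A^dagger := (A^* A)^{-1} A^* : dagger A y is the z with A^* A z = A^* y *)
Definition dagger {X Y : HilbertSpace} (A : X -> Y) : Y -> X :=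
  fun y => epsilon (inhabits hzero) (fun z => adjoint A (A z) = adjoint A y).

Definition injective_op {X Y : HilbertSpace} (A : X -> Y) : Prop :=
  forall x y, A x = A y -> x = y.

Definition closed_image {X Y : HilbertSpace} (A : X -> Y) : Prop :=
  forall y, (forall eps, eps > 0 -> exists x, hnorm (hsub y (A x)) < eps) ->
  exists x, y = A x.

Definition C1_on {X Y : HilbertSpace} (O : X -> Prop) (F : X -> Y)
  (F' : X -> X -> Y) : Prop :=
  (forall x, O x ->
     is_bounded_linear (F' x) /\
     forall eps, eps > 0 -> exists d, d > 0 /\ forall h, hnorm h < d ->
       hnorm (hsub (hsub (F (hadd x h)) (F x)) (F' x h)) <= eps * hnorm h) /\
  (forall x, O x -> forall eps, eps > 0 -> exists d, d > 0 /\
     forall y, O y -> hnorm (hsub y x) < d ->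
       opnorm (fun h => hsub (F' y h) (F' x h)) <= eps).

Definition kappa {X : HilbertSpace} (xs : X) (Rr : R) (O : X -> Prop) : R :=
  epsilon (inhabits 0)
    (fun m => is_lub (fun t => 0 <= t < Rr /\ forall y, ball xs t y -> O y) m).

Definition converges_to {X : HilbertSpace} (u : nat -> X) (l : X) : Prop :=
  forall eps, eps > 0 -> exists N, forall n, (N <= n)%nat -> hnorm (hsub (u n) l) < eps.

(* Main.v *)
Require Import Defs.
From Stdlib Require Import Reals Lra Psatz ClassicalEpsilon Classical.
Open Scope R_scope.

Arguments hadd_assoc {h}. Arguments hadd_comm {h}. Arguments hadd_0 {h}.
Arguments hadd_opp {h}. Arguments hscal_assoc {h}. Arguments hscal_1 {h}.
Arguments hscal_distr_l {h}. Arguments hscal_distr_r {h}. Arguments hinner_sym {h}.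
Arguments hinner_add {h}. Arguments hinner_scal {h}. Arguments hinner_pos {h}.
Arguments hinner_def {h}. Arguments hcomplete {h}.

Section Basics.
Context {X : HilbertSpace}.
Implicit Types x y z u v w : X.

Lemma hadd_0r x : hadd x hzero = x.
Proof. rewrite hadd_comm; apply hadd_0. Qed.
Lemma hadd_oppr x : hadd x (hopp x) = hzero.
Proof. rewrite hadd_comm; apply hadd_opp. Qed.
Lemma hadd_cancel x y z : hadd x y = hadd x z -> y = z.
Proof.
  intros H. rewrite <- (hadd_0 y), <- (hadd_0 z), <- (hadd_opp x).
  rewrite <- !hadd_assoc, H. reflexivity.
Qed.
Lemma hscal_0l x : hscal 0 x = hzero.
Proof.
  apply (hadd_cancel (hscal 0 x)). rewrite <- hscal_distr_r, hadd_0r.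
  f_equal; ring.
Qed.
Lemma hscal_0r a : hscal a (@hzero X) = hzero.
Proof.
  apply (hadd_cancel (hscal a hzero)). rewrite <- hscal_distr_l, !hadd_0r. reflexivity.
Qed.
Lemma hopp_unique x y : hadd x y = hzero -> y = hopp x.
Proof.
  intros H. apply (hadd_cancel x). rewrite H, hadd_oppr. reflexivity.
Qed.
Lemma hopp_scal x : hopp x = hscal (-1) x.
Proof.
  symmetry. apply hopp_unique. rewrite <- (hscal_1 x) at 1.
  rewrite <- hscal_distr_r. replace (1 + -1) with 0 by ring. apply hscal_0l.
Qed.
Lemma hopp_opp x : hopp (hopp x) = x.
Proof. symmetry; apply hopp_unique. apply hadd_opp. Qed.
Lemma hopp_add x y : hopp (hadd x y) = hadd (hopp x) (hopp y).
Proof. rewrite !hopp_scal, hscal_distr_l. reflexivity. Qed.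
Lemma hopp_0 : hopp (@hzero X) = hzero.
Proof. rewrite hopp_scal; apply hscal_0r. Qed.
Lemma hscal_opp a x : hscal a (hopp x) = hopp (hscal a x).
Proof. rewrite !hopp_scal, !hscal_assoc. f_equal; ring. Qed.
Lemma hsub_0r x : hsub x hzero = x.
Proof. unfold hsub. rewrite hopp_0, hadd_0r. reflexivity. Qed.
Lemma hsub_diag x : hsub x x = hzero.
Proof. apply hadd_oppr. Qed.
Lemma hsub_0l x : hsub hzero x = hopp x.
Proof. unfold hsub; apply hadd_0. Qed.
Lemma hsub_add_cancel x y : hadd (hsub x y) y = x.
Proof. unfold hsub. rewrite <- hadd_assoc, hadd_opp, hadd_0r. reflexivity. Qed.
Lemma hsub_chain x y z : hsub x z = hadd (hsub x y) (hsub y z).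
Proof.
  unfold hsub. rewrite hadd_assoc, <- (hadd_assoc x (hopp y)), hadd_opp, hadd_0r.
  reflexivity.
Qed.
Lemma hsub_opp x y : hopp (hsub x y) = hsub y x.
Proof. unfold hsub. rewrite hopp_add, hopp_opp, hadd_comm. reflexivity. Qed.
Lemma hadd_swap4 (a b c d : X) : hadd (hadd a b) (hadd c d) = hadd (hadd a c) (hadd b d).
Proof.
  rewrite <- !hadd_assoc. f_equal. rewrite !hadd_assoc. f_equal. apply hadd_comm.
Qed.
Lemma hsub_add x y z w : hsub (hadd x y) (hadd z w) = hadd (hsub x z) (hsub y w).
Proof. unfold hsub. rewrite hopp_add, hadd_swap4. reflexivity. Qed.
Lemma hscal_sub a x y : hscal a (hsub x y) = hsub (hscal a x) (hscal a y).
Proof. unfold hsub. rewrite hscal_distr_l, hscal_opp. reflexivity. Qed.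
Lemma hscal_sub_r a b x : hscal (a - b) x = hsub (hscal a x) (hscal b x).
Proof. unfold hsub. rewrite hopp_scal, hscal_assoc, <- hscal_distr_r. f_equal; ring. Qed.

Lemma hinner_addr x y z : hinner x (hadd y z) = hinner x y + hinner x z.
Proof. rewrite !(hinner_sym x), hinner_add; reflexivity. Qed.
Lemma hinner_scalr a x y : hinner x (hscal a y) = a * hinner x y.
Proof. rewrite !(hinner_sym x), hinner_scal; reflexivity. Qed.
Lemma hinner_0l x : hinner hzero x = 0.
Proof. rewrite <- (hscal_0l hzero), hinner_scal. ring. Qed.
Lemma hinner_0r x : hinner x hzero = 0.
Proof. rewrite hinner_sym; apply hinner_0l. Qed.
Lemma hinner_oppl x y : hinner (hopp x) y = - hinner x y.
Proof. rewrite hopp_scal, hinner_scal. ring. Qed.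
Lemma hinner_oppr x y : hinner x (hopp y) = - hinner x y.
Proof. rewrite hopp_scal, hinner_scalr. ring. Qed.
Lemma hinner_subl x y z : hinner (hsub x y) z = hinner x z - hinner y z.
Proof. unfold hsub. rewrite hinner_add, hinner_oppl. ring. Qed.
Lemma hinner_subr x y z : hinner x (hsub y z) = hinner x y - hinner x z.
Proof. unfold hsub. rewrite hinner_addr, hinner_oppr. ring. Qed.

Lemma hnorm_ge0 x : 0 <= hnorm x.
Proof. apply sqrt_pos. Qed.
Lemma hnorm_sq x : hnorm x * hnorm x = hinner x x.
Proof. unfold hnorm. apply sqrt_sqrt, hinner_pos. Qed.
Lemma hnorm_zero : hnorm (@hzero X) = 0.
Proof. unfold hnorm. rewrite hinner_0l. apply sqrt_0. Qed.
Lemma hnorm_eq0 x : hnorm x = 0 -> x = hzero.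
Proof. intros H. apply hinner_def. rewrite <- hnorm_sq, H. ring. Qed.
Lemma hnorm_scal a x : hnorm (hscal a x) = Rabs a * hnorm x.
Proof.
  unfold hnorm. rewrite hinner_scal, hinner_scalr, <- Rmult_assoc.
  rewrite sqrt_mult_alt. 2: nra.
  f_equal. rewrite <- sqrt_Rsqr_abs. reflexivity.
Qed.
End Basics.
Section Norms.
Context {X : HilbertSpace}.
Implicit Types x y z u v w : X.

Lemma hinner_sq_expand x y a :
  hinner (hsub x (hscal a y)) (hsub x (hscal a y)) =
  hinner x x - 2 * a * hinner x y + a * a * hinner y y.
Proof.
  rewrite hinner_subl, !hinner_subr, !hinner_scal, !hinner_scalr, (hinner_sym y x). ring.
Qed.

Lemma CS_sq x y : hinner x y * hinner x y <= hinner x x * hinner y y.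
Proof.
  destruct (Req_dec (hinner y y) 0) as [H|H].
  - apply hinner_def in H. subst y. rewrite !hinner_0r. lra.
  - pose proof (hinner_pos y).
    pose proof (hinner_pos (hsub x (hscal (hinner x y / hinner y y) y))) as P.
    rewrite hinner_sq_expand in P.
    set (a := hinner x y) in *. set (b := hinner y y) in *. set (c := hinner x x) in *.
    assert (b > 0) by lra.
    assert (E : c - 2 * (a / b) * a + a / b * (a / b) * b = (c*b - a*a)/b) by (field; lra).
    rewrite E in P. apply Rmult_le_compat_r with (r := b) in P; [|lra].
    unfold Rdiv in P. rewrite Rmult_assoc, Rinv_l, Rmult_0_l in P by lra. lra.
Qed.

Lemma CS x y : Rabs (hinner x y) <= hnorm x * hnorm y.
Proof.
  pose proof (CS_sq x y). rewrite <- !hnorm_sq in H.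
  pose proof (hnorm_ge0 x); pose proof (hnorm_ge0 y).
  set (p := hnorm x * hnorm y) in *.
  assert (a2 : hinner x y * hinner x y <= p * p) by (unfold p; nra).
  assert (0 <= p) by (unfold p; nra).
  apply Rabs_le. split; nra.
Qed.
Lemma CS' x y : hinner x y <= hnorm x * hnorm y.
Proof. pose proof (CS x y). pose proof (Rle_abs (hinner x y)). lra. Qed.

Lemma hnorm_triangle x y : hnorm (hadd x y) <= hnorm x + hnorm y.
Proof.
  pose proof (CS' x y). pose proof (hnorm_ge0 (hadd x y)).
  pose proof (hnorm_ge0 x); pose proof (hnorm_ge0 y).
  assert (E : hnorm (hadd x y) * hnorm (hadd x y) = hnorm x * hnorm x + 2 * hinner x y + hnorm y * hnorm y).
  { rewrite !hnorm_sq, hinner_add, !hinner_addr, (hinner_sym y x). ring. }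
  nra.
Qed.
Lemma hnorm_opp x : hnorm (hopp x) = hnorm x.
Proof. rewrite hopp_scal, hnorm_scal. replace (Rabs (-1)) with 1. ring.
  rewrite Rabs_left; lra. Qed.
Lemma hnorm_sub_sym x y : hnorm (hsub x y) = hnorm (hsub y x).
Proof. rewrite <- hsub_opp, hnorm_opp. reflexivity. Qed.
Lemma hnorm_sub_le x y : hnorm (hsub x y) <= hnorm x + hnorm y.
Proof. unfold hsub. rewrite <- (hnorm_opp y). apply hnorm_triangle. Qed.
Lemma hnorm_chain x y z : hnorm (hsub x z) <= hnorm (hsub x y) + hnorm (hsub y z).
Proof. rewrite (hsub_chain x y z). apply hnorm_triangle. Qed.
Lemma hnorm_rev x y : hnorm x - hnorm y <= hnorm (hsub x y).
Proof.
  pose proof (hnorm_triangle (hsub x y) y). rewrite hsub_add_cancel in H. lra.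
Qed.
Lemma hnorm_sq_eq x y : hnorm (hsub x y) * hnorm (hsub x y) =
  hnorm x * hnorm x - 2 * hinner x y + hnorm y * hnorm y.
Proof. rewrite !hnorm_sq, hinner_subl, !hinner_subr, (hinner_sym y x). ring. Qed.
Lemma hnorm_sq_add x y : hnorm (hadd x y) * hnorm (hadd x y) =
  hnorm x * hnorm x + 2 * hinner x y + hnorm y * hnorm y.
Proof. rewrite !hnorm_sq, hinner_add, !hinner_addr, (hinner_sym y x). ring. Qed.
Lemma hinner_zero_all x : (forall y, hinner y x = 0) -> x = hzero.
Proof. intros H. apply hinner_def, H. Qed.
Lemma eq_by_inner x y : (forall z, hinner z x = hinner z y) -> x = y.
Proof.
  intros H. assert (hsub x y = hzero).
  { apply hinner_zero_all. intros z. rewrite hinner_subr, H. ring. }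
  rewrite <- (hsub_add_cancel x y), H0, hadd_0. reflexivity.
Qed.
End Norms.
Section Limits.
Context {X : HilbertSpace}.

Lemma cauchy_lim (u : nat -> X) (b : nat -> R) :
  (forall eps, eps > 0 -> exists N, forall n, (N <= n)%nat -> b n < eps) ->
  (forall n m, (n <= m)%nat -> hnorm (hsub (u n) (u m)) <= b n) ->
  exists l, forall n, hnorm (hsub (u n) l) <= b n.
Proof.
  intros Hb Hu.
  destruct (hcomplete u) as [l Hl].
  { intros eps Heps. destruct (Hb eps Heps) as [N HN]. exists N.
    intros m n Hm Hn. change (hnorm (hsub (u m) (u n)) < eps).
    destruct (Nat.le_ge_cases n m) as [H|H].
    - rewrite hnorm_sub_sym. eapply Rle_lt_trans. apply Hu, H. apply HN, Hn.
    - eapply Rle_lt_trans. apply Hu, H. apply HN, Hm. }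
  exists l. intros n. apply Rle_plus_epsilon. intros eps Heps.
  destruct (Hl eps Heps) as [N HN].
  pose proof (HN (Nat.max n N) (Nat.le_max_r _ _)) as H1. change (hnorm (hsub (u (Nat.max n N)) l) < eps) in H1.
  pose proof (Hu n (Nat.max n N) (Nat.le_max_l _ _)).
  pose proof (hnorm_chain (u n) (u (Nat.max n N)) l). lra.
Qed.

Lemma geom_to0 (C : R) : forall eps, eps > 0 -> exists N, forall n, (N <= n)%nat -> C * (/2)^n < eps.
Proof.
  intros eps Heps.
  destruct (pow_lt_1_zero (/2) ltac:(rewrite Rabs_right; lra) (eps / (Rabs C + 1))) as [N HN].
  { apply Rdiv_lt_0_compat; [lra|]. pose proof (Rabs_pos C); lra. }
  exists N. intros n Hn. specialize (HN n Hn).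
  pose proof (Rabs_pos C). pose proof (Rle_abs C).
  assert (0 <= (/2)^n) by (apply pow_le; lra).
  rewrite Rabs_right in HN by lra.
  apply Rmult_lt_compat_l with (r := Rabs C + 1) in HN; [|lra].
  replace ((Rabs C + 1) * (eps / (Rabs C + 1))) with eps in HN by (field; lra).
  nra.
Qed.

Lemma inv_to0 (C : R) : forall eps, eps > 0 -> exists N, forall n, (N <= n)%nat -> sqrt (C / (INR n + 1)) < eps.
Proof.
  intros eps Heps.
  destruct (INR_unbounded (C / (eps*eps))) as [N HN].
  exists N. intros n Hn.
  apply le_INR in Hn. pose proof (pos_INR N).
  rewrite <- (sqrt_square eps) by lra.
  destruct (Rle_dec (C / (INR n + 1)) 0) as [Hc|Hc].
  - rewrite sqrt_neg_0 by lra. apply sqrt_lt_R0. nra.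
  - apply sqrt_lt_1_alt. split; [lra|].
    assert (0 < eps * eps) by nra.
    apply Rmult_lt_reg_r with (r := INR n + 1); [lra|].
    unfold Rdiv. rewrite Rmult_assoc, Rinv_l, Rmult_1_r by lra.
    apply Rmult_lt_reg_r with (r := / (eps*eps)). apply Rinv_0_lt_compat; lra.
    replace (eps * eps * (INR n + 1) * / (eps * eps)) with (INR n + 1) by (field; lra).
    unfold Rdiv in HN. lra.
Qed.
End Limits.
Ltac vec_eq := apply eq_by_inner; intros ?;
  do 4 rewrite ?hinner_addr, ?hinner_subr, ?hinner_scalr, ?hinner_oppr, ?hinner_0r; first [ring | field].

Section Proj.
Context {X : HilbertSpace}.

Definition closed_subspace (C : X -> Prop) : Prop :=
  C hzero /\ (forall x y, C x -> C y -> C (hadd x y)) /\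
  (forall a x, C x -> C (hscal a x)) /\
  (forall y, (forall eps, eps > 0 -> exists z, C z /\ hnorm (hsub y z) < eps) -> C y).

Lemma sqrt_of_sq_le (x y : R) : 0 <= x -> x * x <= y -> x <= sqrt y.
Proof. intros H1 H2. rewrite <- (sqrt_square x) by lra. apply sqrt_le_1_alt; lra. Qed.

Lemma projection (C : X -> Prop) (v : X) : closed_subspace C ->
  exists p, C p /\ forall z, C z -> hinner (hsub v p) z = 0.
Proof.
  intros (C0 & Cadd & Cscal & Ccl).
  set (E := fun t => exists z, C z /\ t = - (hnorm (hsub v z) * hnorm (hsub v z))).
  destruct (completeness E) as [m [Hub Hlub]].
  { exists 0. intros t [z [_ ->]]. pose proof (hnorm_ge0 (hsub v z)). nra. }
  { exists (- (hnorm (hsub v hzero) * hnorm (hsub v hzero))). exists hzero. auto. }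
  set (d2 := - m).
  assert (Hinf : forall z, C z -> d2 <= hnorm (hsub v z) * hnorm (hsub v z)).
  { intros z Hz. unfold d2. assert (E (- (hnorm (hsub v z) * hnorm (hsub v z)))) by (exists z; auto).
    apply Hub in H. lra. }
  assert (Hd0 : 0 <= d2).
  { unfold d2. assert (m <= 0). apply Hlub. intros t [z [_ ->]]. pose proof (hnorm_ge0 (hsub v z)). nra. lra. }
  assert (Happ : forall n : nat, exists z, C z /\ hnorm (hsub v z) * hnorm (hsub v z) < d2 + / (INR n + 1)).
  { intros n. pose proof (pos_INR n). assert (Hp : / (INR n + 1) > 0) by (apply Rinv_0_lt_compat; lra).
    apply NNPP. intros Hn.
    assert (m <= m - / (INR n + 1)).
    { apply Hlub. intros t [z [Hz ->]]. apply Rnot_lt_le. intros Hlt. apply Hn. exists z. split; auto.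
      unfold d2. lra. }
    lra. }
  set (zf := fun n => proj1_sig (constructive_indefinite_description _ (Happ n))).
  assert (Hzf : forall n, C (zf n) /\ hnorm (hsub v (zf n)) * hnorm (hsub v (zf n)) < d2 + / (INR n + 1)).
  { intros n. unfold zf. destruct (constructive_indefinite_description _ (Happ n)). simpl. auto. }
  destruct (cauchy_lim zf (fun n => sqrt (4 / (INR n + 1)))) as [p Hp].
  { apply inv_to0. }
  { intros n k Hnk. apply sqrt_of_sq_le. apply hnorm_ge0.
    destruct (Hzf n) as [Cn Hn]. destruct (Hzf k) as [Ck Hk].
    set (mid := hscal (/2) (hadd (zf n) (zf k))).
    assert (Cm : C mid) by (apply Cscal, Cadd; auto).
    pose proof (Hinf mid Cm).
    assert (Eq1 : hadd (hsub v (zf n)) (hsub v (zf k)) = hscal 2 (hsub v mid)) by (unfold mid; vec_eq).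
    assert (Eq2 : hsub (zf n) (zf k) = hsub (hsub v (zf k)) (hsub v (zf n))) by vec_eq.
    assert (Par : hnorm (hsub (zf n) (zf k)) * hnorm (hsub (zf n) (zf k)) +
                  hnorm (hadd (hsub v (zf n)) (hsub v (zf k))) * hnorm (hadd (hsub v (zf n)) (hsub v (zf k)))
                  = 2 * (hnorm (hsub v (zf n)) * hnorm (hsub v (zf n))) + 2 * (hnorm (hsub v (zf k)) * hnorm (hsub v (zf k)))).
    { rewrite Eq2, hnorm_sq_eq, hnorm_sq_add, (hinner_sym (hsub v (zf k))). ring. }
    rewrite Eq1, hnorm_scal, Rabs_right in Par by lra.
    apply le_INR in Hnk. pose proof (pos_INR n).
    assert (/ (INR k + 1) <= / (INR n + 1)) by (apply Rinv_le_contravar; lra).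
    unfold Rdiv. nra. }
  assert (Cp : C p).
  { apply Ccl. intros eps Heps. destruct (inv_to0 4 eps Heps) as [N HN].
    exists (zf N). split. apply Hzf. rewrite hnorm_sub_sym. eapply Rle_lt_trans. apply Hp. apply HN. lia. }
  assert (Hvp : hnorm (hsub v p) * hnorm (hsub v p) <= d2).
  { apply Rle_plus_epsilon. intros eps Heps.
    set (e' := Rmin 1 (eps / (2 * d2 + 6))).
    assert (He' : 0 < e') by (unfold e'; apply Rmin_glb_lt; [lra| apply Rdiv_lt_0_compat; lra]).
    assert (He'1 : e' <= 1) by apply Rmin_l.
    assert (He'2 : e' * (2 * d2 + 6) <= eps).
    { unfold e'. pose proof (Rmin_r 1 (eps / (2 * d2 + 6))).
      apply Rmult_le_compat_r with (r := 2*d2+6) in H; [|lra].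
      unfold Rdiv in H. rewrite Rmult_assoc, Rinv_l, Rmult_1_r in H by lra. exact H. }
    destruct (inv_to0 4 e' He') as [N HN]. specialize (HN N (le_n N)).
    specialize (Hp N). destruct (Hzf N) as [_ HzN].
    set (bN := sqrt (4 / (INR N + 1))) in *.
    assert (0 <= bN) by apply sqrt_pos.
    assert (HbN : bN * bN = 4 / (INR N + 1)).
    { unfold bN. apply sqrt_sqrt. pose proof (pos_INR N). apply Rlt_le, Rdiv_lt_0_compat; lra. }
    assert (Hinv : / (INR N + 1) = bN * bN / 4) by (rewrite HbN; field; pose proof (pos_INR N); lra).
    rewrite Hinv in HzN.
    pose proof (hnorm_chain v (zf N) p).
    pose proof (hnorm_ge0 (hsub v (zf N))). pose proof (hnorm_ge0 (hsub v p)).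
    set (a := hnorm (hsub v (zf N))) in *.
    assert (a <= d2 + 2) by nra.
    assert (hnorm (hsub v p) <= a + bN) by lra.
    assert (hnorm (hsub v p) * hnorm (hsub v p) <= (a + bN) * (a + bN)) by nra.
    nra. }
  exists p. split; auto.
  intros z Hz.
  set (a := hinner (hsub v p) z). set (b := hinner z z).
  assert (Hb : 0 <= b) by apply hinner_pos.
  set (t := a / (b + 1)).
  assert (Ct : C (hadd p (hscal t z))) by (apply Cadd; auto).
  pose proof (Hinf _ Ct) as Hq.
  assert (Eq : hsub v (hadd p (hscal t z)) = hsub (hsub v p) (hscal t z)) by vec_eq.
  rewrite Eq, hnorm_sq, hinner_sq_expand, <- hnorm_sq in Hq. fold a b in Hq.
  assert (2 * t * a <= t * t * b) by lra.
  unfold t in H. 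
  assert (Hb1 : b + 1 > 0) by lra.
  assert (2 * a * a * (b+1) <= a * a * b).
  { apply Rmult_le_compat_r with (r := (b+1)*(b+1)) in H; [|nra].
    replace (2 * (a / (b + 1)) * a * ((b + 1) * (b + 1))) with (2 * a * a * (b+1)) in H by (field; lra).
    replace (a / (b + 1) * (a / (b + 1)) * b * ((b + 1) * (b + 1))) with (a * a * b) in H by (field; lra).
    exact H. }
  nra.
Qed.
End Proj.
Section Lin.
Context {X Y : HilbertSpace}.

Lemma lin_0 (A : X -> Y) : is_linear A -> A hzero = hzero.
Proof. intros [_ H]. rewrite <- (hscal_0l (@hzero X)), H, hscal_0l. reflexivity. Qed.
Lemma lin_opp (A : X -> Y) x : is_linear A -> A (hopp x) = hopp (A x).
Proof. intros [_ H]. rewrite !hopp_scal, H. reflexivity. Qed.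
Lemma lin_sub (A : X -> Y) x y : is_linear A -> A (hsub x y) = hsub (A x) (A y).
Proof. intros HA. unfold hsub. rewrite (proj1 HA), lin_opp; auto. Qed.
Lemma lin_add (A : X -> Y) x y : is_linear A -> A (hadd x y) = hadd (A x) (A y).
Proof. intros HA. apply (proj1 HA). Qed.
Lemma lin_scal (A : X -> Y) a x : is_linear A -> A (hscal a x) = hscal a (A x).
Proof. intros HA. apply (proj2 HA). Qed.

Lemma bound_nonneg (A : X -> Y) M : (forall x, hnorm (A x) <= M * hnorm x) ->
  forall x, hnorm (A x) <= Rabs M * hnorm x.
Proof.
  intros H x. pose proof (H x). pose proof (Rle_abs M). pose proof (hnorm_ge0 x). nra.
Qed.

Definition opset (f : X -> Y) (t : R) : Prop := exists x, hnorm x <= 1 /\ t = hnorm (f x).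

Lemma opnorm_lub (f : X -> Y) B : (forall x, hnorm x <= 1 -> hnorm (f x) <= B) ->
  is_lub (opset f) (opnorm f).
Proof.
  intros H. unfold opnorm. apply epsilon_spec.
  destruct (completeness (opset f)) as [m Hm].
  { exists B. intros t [x [Hx ->]]. auto. }
  { exists (hnorm (f hzero)). exists hzero. rewrite hnorm_zero. split; auto; lra. }
  exists m; exact Hm.
Qed.

Lemma opnorm_le (f : X -> Y) B : (forall x, hnorm x <= 1 -> hnorm (f x) <= B) -> opnorm f <= B.
Proof.
  intros H. destruct (opnorm_lub f B H) as [_ Hl]. apply Hl. intros t [x [Hx ->]]. auto.
Qed.

Lemma opnorm_unit (f : X -> Y) B : (forall x, hnorm x <= 1 -> hnorm (f x) <= B) ->
  forall x, hnorm x <= 1 -> hnorm (f x) <= opnorm f.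
Proof.
  intros H x Hx. destruct (opnorm_lub f B H) as [Hu _]. apply Hu. exists x; auto.
Qed.

Lemma opnorm_pt (f : X -> Y) M : (forall x, hnorm (f x) <= M * hnorm x) ->
  (forall a x, f (hscal a x) = hscal a (f x)) ->
  forall x, hnorm (f x) <= opnorm f * hnorm x.
Proof.
  intros HM Hh x.
  assert (HB : forall x, hnorm x <= 1 -> hnorm (f x) <= Rabs M).
  { intros y Hy. pose proof (bound_nonneg f M HM y). pose proof (Rabs_pos M).
    pose proof (hnorm_ge0 y). nra. }
  pose proof (opnorm_unit f _ HB) as Hu.
  destruct (Req_dec (hnorm x) 0) as [H0|H0].
  - apply hnorm_eq0 in H0. subst x. rewrite <- (hscal_0l (@hzero X)), Hh, !hscal_0l. rewrite !hnorm_zero. nra.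
  - pose proof (hnorm_ge0 x). set (s := / hnorm x).
    assert (Hs : s > 0) by (apply Rinv_0_lt_compat; lra).
    specialize (Hu (hscal s x)). rewrite Hh, !hnorm_scal, Rabs_right in Hu by lra.
    unfold s in Hu. rewrite Rinv_l in Hu by lra.
    specialize (Hu (Rle_refl 1)).
    apply Rmult_le_compat_r with (r := hnorm x) in Hu; [|lra].
    replace (/ hnorm x * hnorm (f x) * hnorm x) with (hnorm (f x)) in Hu by (field; lra).
    exact Hu.
Qed.

Lemma opnorm_ge0 (f : X -> Y) B : (forall x, hnorm x <= 1 -> hnorm (f x) <= B) -> 0 <= opnorm f.
Proof.
  intros H. eapply Rle_trans. apply (hnorm_ge0 (f hzero)). apply (opnorm_unit f B H (hzero : X)).
  rewrite hnorm_zero; lra.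
Qed.
End Lin.

Section Riesz.
Context {X : HilbertSpace}.

Lemma riesz (phi : X -> R) :
  (forall x y, phi (hadd x y) = phi x + phi y) -> (forall a x, phi (hscal a x) = a * phi x) ->
  (exists M, forall x, Rabs (phi x) <= M * hnorm x) ->
  exists z, forall x, phi x = hinner x z.
Proof.
  intros Hadd Hsc [M HM].
  assert (P0 : phi hzero = 0) by (rewrite <- (hscal_0l (@hzero X)), Hsc; ring).
  assert (Psub : forall x y, phi (hsub x y) = phi x - phi y).
  { intros x y. unfold hsub. rewrite Hadd, hopp_scal, Hsc. ring. }
  destruct (classic (forall x, phi x = 0)) as [Hz|Hnz].
  { exists hzero. intros x. rewrite Hz, hinner_0r. reflexivity. }
  apply not_all_ex_not in Hnz. destruct Hnz as [x0 Hx0].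
  set (C := fun x => phi x = 0).
  assert (CC : closed_subspace C).
  { unfold C; repeat split.
    - exact P0.
    - intros x y Hx Hy. rewrite Hadd, Hx, Hy. ring.
    - intros a x Hx. rewrite Hsc, Hx. ring.
    - intros y Hy. apply NNPP. intros Hne.
      set (M' := Rabs M + 1).
      assert (HM' : M' > 0) by (unfold M'; pose proof (Rabs_pos M); lra).
      assert (Hpos : Rabs (phi y) > 0) by (apply Rabs_pos_lt; auto).
      destruct (Hy (Rabs (phi y) / M')) as [z [Hz Hyz]]. apply Rdiv_lt_0_compat; lra.
      pose proof (HM (hsub y z)). rewrite Psub, Hz, Rminus_0_r in H.
      pose proof (Rle_abs M). pose proof (hnorm_ge0 (hsub y z)).
      assert (Rabs (phi y) <= M' * hnorm (hsub y z)) by (unfold M'; nra).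
      apply Rmult_lt_compat_l with (r := M') in Hyz; [|lra].
      replace (M' * (Rabs (phi y) / M')) with (Rabs (phi y)) in Hyz by (field; lra). lra. }
  destruct (projection C x0 CC) as [p [Cp Hp]].
  set (w := hsub x0 p).
  assert (Hw : phi w <> 0) by (unfold w; rewrite Psub; unfold C in Cp; rewrite Cp; lra).
  assert (Hww : hinner w w > 0).
  { pose proof (hinner_pos w). destruct (Req_dec (hinner w w) 0) as [E|E]; [|lra].
    apply hinner_def in E. rewrite E in Hw. contradiction. }
  exists (hscal (phi w / hinner w w) w). intros x.
  assert (Cy : C (hsub x (hscal (phi x / phi w) w))).
  { unfold C. rewrite Psub, Hsc. field. auto. }
  specialize (Hp _ Cy). fold w in Hp.
  rewrite hinner_subr, hinner_scalr in Hp.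
  rewrite hinner_scalr, (hinner_sym x w).
  assert (hinner w x = phi x / phi w * hinner w w) by lra.
  rewrite H. field. split; lra.
Qed.
End Riesz.

Section Adjoint.
Context {X Y : HilbertSpace}.

Lemma adjoint_spec (A : X -> Y) : is_bounded_linear A ->
  forall y x, hinner (A x) y = hinner x (adjoint A y).
Proof.
  intros [HA [M HM]] y. unfold adjoint. apply epsilon_spec.
  apply riesz.
  - intros x z. rewrite lin_add, hinner_add; auto.
  - intros a x. rewrite lin_scal, hinner_scal; auto.
  - exists (Rabs M * hnorm y). intros x. eapply Rle_trans. apply CS.
    pose proof (bound_nonneg A M HM x). pose proof (hnorm_ge0 y). nra.
Qed.

Lemma adjoint_bl (A : X -> Y) : is_bounded_linear A -> is_bounded_linear (adjoint A).
Proof.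
  intros HA. pose proof (adjoint_spec A HA) as S.
  split; [split|].
  - intros y z. apply eq_by_inner. intros x. rewrite hinner_addr, <- !S, hinner_addr. reflexivity.
  - intros a y. apply eq_by_inner. intros x. rewrite hinner_scalr, <- !S, hinner_scalr. reflexivity.
  - destruct HA as [HL [M HM]]. exists (Rabs M). intros y.
    set (z := adjoint A y).
    assert (E : hnorm z * hnorm z <= Rabs M * hnorm z * hnorm y).
    { rewrite hnorm_sq. unfold z. rewrite <- S. eapply Rle_trans. apply CS'.
      pose proof (bound_nonneg A M HM (adjoint A y)). pose proof (hnorm_ge0 y). nra. }
    pose proof (hnorm_ge0 z). pose proof (hnorm_ge0 y). pose proof (Rabs_pos M).
    destruct (Req_dec (hnorm z) 0) as [E0|E0]. rewrite E0. nra.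
    apply Rmult_le_reg_l with (r := hnorm z). lra. nra.
Qed.
End Adjoint.
Section OpenMap.
Context {X Y : HilbertSpace}.
Variable T : X -> Y.
Hypothesis HT : is_bounded_linear T.
Hypothesis Hinj : injective_op T.
Hypothesis Hcl : closed_image T.

Let W (y : Y) : Prop := exists x, y = T x.
Let HL : is_linear T := proj1 HT.

Lemma baire_claim : exists (n : nat) (y0 : Y) (rho : R), W y0 /\ rho > 0 /\
  forall y, W y -> hnorm (hsub y y0) < rho -> forall eps, eps > 0 ->
  exists h, hnorm h <= INR n /\ hnorm (hsub y (T h)) < eps.
Proof.
  apply NNPP. intros Hn.
  assert (Hneg : forall (n : nat) (y0 : Y) (rho : R), W y0 -> rho > 0 ->
    exists y eps, W y /\ hnorm (hsub y y0) < rho /\ eps > 0 /\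
      forall h, hnorm h <= INR n -> eps <= hnorm (hsub y (T h))).
  { intros n y0 rho Wy0 Hr. apply NNPP. intros Hc. apply Hn. exists n, y0, rho.
    split; auto. split; auto. intros y Wy Hy eps He. apply NNPP. intros Hh.
    apply Hc. exists y, eps. split; auto. split; auto. split; auto.
    intros h Hh'. apply Rnot_lt_le. intros Hlt. apply Hh. exists h; auto. }
  assert (Hstep : forall (n : nat) (p : Y * R), exists q : Y * R,
    W (fst p) -> snd p > 0 ->
    W (fst q) /\ snd q > 0 /\ hnorm (hsub (fst q) (fst p)) + snd q <= snd p /\
    snd q <= snd p / 2 /\
    forall z h, hnorm (hsub z (fst q)) <= snd q -> hnorm h <= INR n -> z <> T h).
  { intros n [y0 rho]. simpl.
    destruct (classic (W y0 /\ rho > 0)) as [[Wy0 Hr]|Hno].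
    2:{ exists (y0, rho). intros; exfalso; tauto. }
    destruct (Hneg n y0 (rho/2) Wy0 ltac:(lra)) as [y [eps [Wy [Hy [He Hh]]]]].
    exists (y, Rmin (eps/2) (rho/2)). simpl. intros _ _.
    assert (Hm1 := Rmin_l (eps/2) (rho/2)). assert (Hm2 := Rmin_r (eps/2) (rho/2)).
    assert (0 < Rmin (eps/2) (rho/2)) by (apply Rmin_glb_lt; lra).
    split; auto. split; auto. split; [lra|]. split; [lra|].
    intros z h Hz Hhn Ez. specialize (Hh h Hhn). subst z. rewrite hnorm_sub_sym in Hz. lra. }
  set (step := fun n p => proj1_sig (constructive_indefinite_description _ (Hstep n p))).
  assert (Hst : forall n p, W (fst p) -> snd p > 0 ->
    W (fst (step n p)) /\ snd (step n p) > 0 /\ hnorm (hsub (fst (step n p)) (fst p)) + snd (step n p) <= snd p /\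
    snd (step n p) <= snd p / 2 /\
    forall z h, hnorm (hsub z (fst (step n p))) <= snd (step n p) -> hnorm h <= INR n -> z <> T h).
  { intros n p. unfold step. destruct (constructive_indefinite_description _ (Hstep n p)). simpl. auto. }
  set (sq := fix sq (k : nat) : Y * R := match k with O => (T hzero, 1) | S k => step k (sq k) end).
  assert (Hinv : forall k, W (fst (sq k)) /\ snd (sq k) > 0).
  { induction k. simpl. split. exists hzero; auto. lra.
    destruct IHk as [A B]. simpl. destruct (Hst k (sq k) A B) as [A' [B' _]]. auto. }
  assert (Hnest : forall n m, (n <= m)%nat -> hnorm (hsub (fst (sq m)) (fst (sq n))) + snd (sq m) <= snd (sq n)).
  { intros n m Hnm. induction Hnm.
    - rewrite hsub_diag, hnorm_zero. lra.
    - destruct (Hinv m) as [A B]. destruct (Hst m (sq m) A B) as [_ [_ [C _]]].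
      simpl. pose proof (hnorm_chain (fst (step m (sq m))) (fst (sq m)) (fst (sq n))). lra. }
  assert (Hgeo : forall k, snd (sq k) <= 1 * (/2)^k).
  { induction k. simpl. lra. destruct (Hinv k) as [A B]. destruct (Hst k (sq k) A B) as [_ [_ [_ [D _]]]].
    simpl. simpl in IHk. lra. }
  destruct (cauchy_lim (fun k => fst (sq k)) (fun k => snd (sq k))) as [ys Hys].
  { intros eps He. destruct (geom_to0 1 eps He) as [N HN]. exists N. intros n Hn2.
    specialize (HN n Hn2). specialize (Hgeo n). lra. }
  { intros n m Hnm. specialize (Hnest n m Hnm). rewrite hnorm_sub_sym.
    pose proof (proj2 (Hinv m)). lra. }
  destruct (Hcl ys) as [h Hh].
  { intros eps He. destruct (geom_to0 1 eps He) as [N HN].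
    destruct (proj1 (Hinv N)) as [x Hx]. exists x. rewrite <- Hx, hnorm_sub_sym.
    specialize (Hys N). specialize (HN N (le_n N)). specialize (Hgeo N). lra. }
  destruct (INR_unbounded (hnorm h)) as [n Hn3].
  destruct (Hinv n) as [A B]. destruct (Hst n (sq n) A B) as [_ [_ [_ [_ E]]]].
  apply (E ys h). rewrite hnorm_sub_sym. apply (Hys (S n)). lra. exact Hh.
Qed.

Lemma halving : exists Cc, Cc >= 0 /\ forall y, W y ->
  exists h, hnorm h <= Cc * hnorm y /\ hnorm (hsub y (T h)) <= hnorm y / 2.
Proof.
  destruct baire_claim as [n [y0 [rho [Wy0 [Hr Hc]]]]].
  assert (HA : forall u, W u -> hnorm u < rho -> forall eps, eps > 0 ->
     exists h, hnorm h <= 2 * INR n /\ hnorm (hsub u (T h)) < eps).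
  { intros u [xu Hu] Hun eps He. destruct Wy0 as [x0 Hx0].
    destruct (Hc (hadd y0 u)) with (eps := eps/2) as [h1 [H1 H1']].
    exists (hadd x0 xu). rewrite lin_add, Hx0, Hu; auto.
    replace (hsub (hadd y0 u) y0) with u by vec_eq. auto. lra.
    destruct (Hc y0) with (eps := eps/2) as [h2 [H2 H2']]. exists x0; auto.
    rewrite hsub_diag, hnorm_zero. lra. lra.
    exists (hsub h1 h2). split.
    - pose proof (hnorm_sub_le h1 h2). lra.
    - rewrite lin_sub by auto.
      replace (hsub u (hsub (T h1) (T h2))) with (hsub (hsub (hadd y0 u) (T h1)) (hsub y0 (T h2))) by vec_eq.
      pose proof (hnorm_sub_le (hsub (hadd y0 u) (T h1)) (hsub y0 (T h2))). lra. }
  exists (4 * INR n / rho). split.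
  { pose proof (pos_INR n). apply Rle_ge. apply Rmult_le_pos. lra. apply Rlt_le, Rinv_0_lt_compat; lra. }
  intros y [xy Hy].
  destruct (Req_dec (hnorm y) 0) as [E0|E0].
  { apply hnorm_eq0 in E0. exists hzero. rewrite lin_0, E0, hsub_diag, !hnorm_zero by auto. lra. }
  pose proof (hnorm_ge0 y).
  set (s := rho / (2 * hnorm y)).
  assert (Hs : s > 0) by (unfold s; apply Rdiv_lt_0_compat; lra).
  destruct (HA (hscal s y)) with (eps := rho / 4) as [h' [Hh1 Hh2]].
  - exists (hscal s xy). rewrite lin_scal, Hy; auto.
  - rewrite hnorm_scal, Rabs_right by lra. unfold s. field_simplify; lra.
  - lra.
  - exists (hscal (/ s) h'). split.
    + rewrite hnorm_scal, Rabs_right by (apply Rle_ge, Rlt_le, Rinv_0_lt_compat; lra).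
      unfold s. replace (/ (rho / (2 * hnorm y))) with (2 * hnorm y / rho) by (field; lra).
      apply Rle_trans with (2 * hnorm y / rho * (2 * INR n)).
      apply Rmult_le_compat_l. apply Rlt_le, Rdiv_lt_0_compat; lra. auto.
      right. field. lra.
    + rewrite lin_scal by auto.
      replace (hsub y (hscal (/ s) (T h'))) with (hscal (/ s) (hsub (hscal s y) (T h'))).
      2:{ apply eq_by_inner. intros w. rewrite hinner_scalr, !hinner_subr, !hinner_scalr. field. lra. }
      rewrite hnorm_scal, Rabs_right by (apply Rle_ge, Rlt_le, Rinv_0_lt_compat; lra).
      unfold s in *. replace (/ (rho / (2 * hnorm y))) with (2 * hnorm y / rho) by (field; lra).
      apply Rle_trans with (2 * hnorm y / rho * (rho / 4)).
      apply Rmult_le_compat_l. apply Rlt_le, Rdiv_lt_0_compat; lra. lra.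
      right. field. lra.
Qed.

Lemma bounded_below : exists Cb, Cb > 0 /\ forall h, hnorm h <= Cb * hnorm (T h).
Proof.
  destruct halving as [Cc [HCc Hh]].
  assert (Hg : forall y, exists h, W y -> hnorm h <= Cc * hnorm y /\ hnorm (hsub y (T h)) <= hnorm y / 2).
  { intros y. destruct (classic (W y)) as [Wy|Wn]. destruct (Hh y Wy) as [h Hh']. exists h; auto.
    exists hzero; intros; contradiction. }
  set (g := fun y => proj1_sig (constructive_indefinite_description _ (Hg y))).
  assert (Hgs : forall y, W y -> hnorm (g y) <= Cc * hnorm y /\ hnorm (hsub y (T (g y))) <= hnorm y / 2).
  { intros y. unfold g. destruct (constructive_indefinite_description _ (Hg y)). auto. }
  pose proof HT as [_ [M HM]].
  exists (2 * Cc + 1). split. lra.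
  intros x.
  set (sq := fix sq (k : nat) : X := match k with O => x | S k => hsub (sq k) (g (T (sq k))) end).
  assert (sq0 : sq O = x) by reflexivity.
  assert (sqS : forall k, sq (S k) = hsub (sq k) (g (T (sq k)))) by reflexivity.
  clearbody sq.
  set (a := hnorm (T x)).
  assert (Ha : 0 <= a) by apply hnorm_ge0.
  assert (HTs : forall k, hnorm (T (sq k)) <= a * (/2)^k).
  { induction k. rewrite sq0; simpl; fold a; lra. rewrite sqS; simpl.
    rewrite lin_sub by auto. destruct (Hgs (T (sq k))) as [_ B]. exists (sq k). auto.
    simpl in IHk. lra. }
  assert (Hd : forall k, hnorm (hsub (sq k) (sq (S k))) <= Cc * a * (/2)^k).
  { intros k. rewrite sqS. replace (hsub (sq k) (hsub (sq k) (g (T (sq k))))) with (g (T (sq k))) by vec_eq.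
    destruct (Hgs (T (sq k))) as [B _]. exists (sq k); auto.
    specialize (HTs k). eapply Rle_trans. apply B. rewrite Rmult_assoc. apply Rmult_le_compat_l; lra. }
  assert (Hc : forall n m, (n <= m)%nat -> hnorm (hsub (sq n) (sq m)) <= 2 * Cc * a * ((/2)^n - (/2)^m)).
  { intros n m Hnm. induction Hnm.
    - rewrite hsub_diag, hnorm_zero. lra.
    - pose proof (hnorm_chain (sq n) (sq m) (sq (S m))). specialize (Hd m).
      simpl pow. assert (0 <= (/2)^m) by (apply pow_le; lra). nra. }
  destruct (cauchy_lim sq (fun n => 2 * Cc * a * (/2)^n)) as [xs Hxs].
  { apply geom_to0. }
  { intros n m Hnm. specialize (Hc n m Hnm). assert (0 <= (/2)^m) by (apply pow_le; lra).
    assert (0 <= Cc * a * (/2)^m) by (apply Rmult_le_pos; [apply Rmult_le_pos|]; lra). lra. }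
  assert (HTx : T xs = hzero).
  { apply hnorm_eq0. apply Rle_antisym; [|apply hnorm_ge0].
    apply Rle_plus_epsilon. intros eps He.
    destruct (geom_to0 (Rabs M * (2 * Cc * a) + a) eps He) as [N HN].
    specialize (HN N (le_n N)). specialize (Hxs N). specialize (HTs N).
    pose proof (hnorm_triangle (hsub (T xs) (T (sq N))) (T (sq N))).
    rewrite hsub_add_cancel in H.
    rewrite <- lin_sub in H by auto.
    pose proof (bound_nonneg T M HM (hsub xs (sq N))). rewrite (hnorm_sub_sym xs) in H0. pose proof (Rabs_pos M).
    assert (0 <= (/2)^N) by (apply pow_le; lra).
    assert (Rabs M * hnorm (hsub (sq N) xs) <= Rabs M * (2 * Cc * a * (/2)^N)) by (apply Rmult_le_compat_l; lra).
    nra. }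
  assert (xs = hzero) by (apply Hinj; rewrite HTx, lin_0; auto).
  subst xs. specialize (Hxs O). simpl in Hxs. rewrite hsub_0r, sq0 in Hxs. fold a. nra.
Qed.
End OpenMap.
Section MVT.
Context {X Y : HilbertSpace}.

Lemma mvt (F : X -> Y) (F' : X -> X -> Y) (x h : X) (L : R) :
  0 <= L ->
  (forall s, 0 <= s <= 1 -> is_linear (F' (hadd x (hscal s h))) /\
     forall eps, eps > 0 -> exists d, d > 0 /\ forall g, hnorm g < d ->
       hnorm (hsub (hsub (F (hadd (hadd x (hscal s h)) g)) (F (hadd x (hscal s h))))
                   (F' (hadd x (hscal s h)) g)) <= eps * hnorm g) ->
  (forall s, 0 <= s <= 1 ->
     hnorm (hsub (F' (hadd x (hscal s h)) h) (F' x h)) <= L * s * hnorm h * hnorm h) ->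
  hnorm (hsub (hsub (F (hadd x h)) (F x)) (F' x h)) <= L / 2 * hnorm h * hnorm h.
Proof.
  intros HL Hd HLip.
  set (z := fun s => hadd x (hscal s h)).
  assert (z0 : z 0 = x) by (unfold z; rewrite hscal_0l, hadd_0r; reflexivity).
  assert (z1 : z 1 = hadd x h) by (unfold z; rewrite hscal_1; reflexivity).
  set (nh := hnorm h).
  assert (Hnh : 0 <= nh) by apply hnorm_ge0.
  destruct (Req_dec nh 0) as [E0|Enz].
  { apply hnorm_eq0 in E0. rewrite E0, hadd_0r.
    destruct (Hd 0 ltac:(lra)) as [Hlin _]. replace (hadd x (hscal 0 h)) with x in Hlin by (rewrite hscal_0l, hadd_0r; auto). rewrite lin_0, hsub_diag, hsub_diag, hnorm_zero by auto.
    unfold nh; rewrite E0, hnorm_zero. lra. }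
  set (G := fun s => hsub (hsub (F (z s)) (F x)) (hscal s (F' x h))).
  assert (G0 : G 0 = hzero) by (unfold G; rewrite z0, hscal_0l, hsub_diag, hsub_0r; reflexivity).
  assert (G1 : G 1 = hsub (hsub (F (hadd x h)) (F x)) (F' x h)) by (unfold G; rewrite z1, hscal_1; reflexivity).
  rewrite <- G1.
  apply Rle_plus_epsilon. intros eps Heps.
  set (bnd := fun s => L / 2 * (s * s) * (nh * nh) + eps * s).
  assert (Loc : forall t, 0 <= t <= 1 -> exists d, d > 0 /\ forall sg, 0 < sg < d ->
      (t + sg <= 1 -> hnorm (G (t + sg)) <= hnorm (G t) + eps * sg / 2 + sg * L * t * (nh * nh)) /\
      (0 <= t - sg -> hnorm (G t) <= hnorm (G (t - sg)) + eps * sg / 2 + sg * L * t * (nh * nh))).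
  { intros t Ht. destruct (Hd t Ht) as [Hlin Hdiff].
    destruct (Hdiff (eps / (2 * nh))) as [d [Hdp Hdd]]. apply Rdiv_lt_0_compat; lra.
    exists (d / nh). split. apply Rdiv_lt_0_compat; lra.
    intros sg [Hsg1 Hsg2].
    assert (Hsgn : sg * nh < d).
    { apply Rmult_lt_compat_r with (r := nh) in Hsg2; [|lra]. unfold Rdiv in Hsg2.
      rewrite Rmult_assoc, Rinv_l, Rmult_1_r in Hsg2 by lra. lra. }
    specialize (HLip t Ht). fold nh in HLip.
    assert (HLs : hnorm (hscal sg (hsub (F' (z t) h) (F' x h))) <= sg * L * t * (nh * nh)).
    { rewrite hnorm_scal, Rabs_right by lra. unfold z. 
      apply Rle_trans with (sg * (L * t * nh * nh)). apply Rmult_le_compat_l; lra. right; ring. }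
    split.
    - intros Hle.
      specialize (Hdd (hscal sg h)). rewrite hnorm_scal, Rabs_right in Hdd by lra. fold nh in Hdd.
      specialize (Hdd Hsgn).
      assert (Ez : hadd (z t) (hscal sg h) = z (t + sg)) by (unfold z; vec_eq).
      fold (z t) in Hdd. rewrite Ez, lin_scal in Hdd by auto.
      assert (EG : G (t + sg) = hadd (G t) (hadd (hsub (hsub (F (z (t + sg))) (F (z t))) (hscal sg (F' (z t) h)))
                        (hscal sg (hsub (F' (z t) h) (F' x h))))) by (unfold G; vec_eq).
      rewrite EG.
      pose proof (hnorm_triangle (G t) (hadd (hsub (hsub (F (z (t + sg))) (F (z t))) (hscal sg (F' (z t) h)))
                        (hscal sg (hsub (F' (z t) h) (F' x h))))).
      pose proof (hnorm_triangle (hsub (hsub (F (z (t + sg))) (F (z t))) (hscal sg (F' (z t) h)))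
                        (hscal sg (hsub (F' (z t) h) (F' x h)))).
      assert (eps / (2 * nh) * (sg * nh) = eps * sg / 2) by (field; lra). lra.
    - intros Hle.
      specialize (Hdd (hscal (- sg) h)). rewrite hnorm_scal, Rabs_left in Hdd by lra. fold nh in Hdd.
      replace (- - sg) with sg in Hdd by ring.
      specialize (Hdd Hsgn).
      assert (Ez : hadd (z t) (hscal (- sg) h) = z (t - sg)) by (unfold z; vec_eq).
      fold (z t) in Hdd. rewrite Ez, lin_scal in Hdd by auto.
      assert (EG : G t = hadd (hsub (G (t - sg)) (hsub (hsub (F (z (t - sg))) (F (z t))) (hscal (- sg) (F' (z t) h))))
                        (hscal sg (hsub (F' (z t) h) (F' x h)))) by (unfold G; vec_eq).
      rewrite EG.
      pose proof (hnorm_triangle (hsub (G (t - sg)) (hsub (hsub (F (z (t - sg))) (F (z t))) (hscal (- sg) (F' (z t) h))))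
                        (hscal sg (hsub (F' (z t) h) (F' x h)))).
      pose proof (hnorm_sub_le (G (t - sg)) (hsub (hsub (F (z (t - sg))) (F (z t))) (hscal (- sg) (F' (z t) h)))).
      assert (eps / (2 * nh) * (sg * nh) = eps * sg / 2) by (field; lra). lra. }
  set (S := fun t => 0 <= t <= 1 /\ forall s, 0 <= s <= t -> hnorm (G s) <= bnd s).
  destruct (completeness S) as [tau [Hub Hlub]].
  { exists 1. intros t [Ht _]. lra. }
  { exists 0. split. lra. intros s Hs. replace s with 0 by lra. rewrite G0, hnorm_zero. unfold bnd. lra. }
  assert (Htau0 : 0 <= tau) by (apply Hub; split; [lra|]; intros s Hs; replace s with 0 by lra;
    rewrite G0, hnorm_zero; unfold bnd; lra).
  assert (Htau1 : tau <= 1) by (apply Hlub; intros t [Ht _]; lra).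
  assert (Hbelow : forall s, 0 <= s < tau -> hnorm (G s) <= bnd s).
  { intros s Hs. apply NNPP. intros Hn.
    assert (tau <= s); [|lra]. apply Hlub. intros t [Ht Ht2]. apply Rnot_lt_le. intros Hlt.
    apply Hn. apply Ht2. lra. }
  destruct (Loc tau (conj Htau0 Htau1)) as [d [Hdp Hloc]].
  set (sg0 := Rmin (d/2) (eps / (L * (nh * nh) + 1))).
  assert (Hnh2 : 0 <= nh * nh) by nra.
  assert (Hsg0 : 0 < sg0) by (apply Rmin_glb_lt; [lra|apply Rdiv_lt_0_compat; nra]).
  assert (Hsg0d : sg0 < d) by (pose proof (Rmin_l (d/2) (eps / (L * (nh * nh) + 1))); unfold sg0 in *; lra).
  assert (Hsg0e : L * sg0 * (nh * nh) <= eps).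
  { pose proof (Rmin_r (d/2) (eps / (L * (nh * nh) + 1))). fold sg0 in H.
    apply Rmult_le_compat_r with (r := L * (nh * nh) + 1) in H; [|nra].
    replace (eps / (L * (nh * nh) + 1) * (L * (nh * nh) + 1)) with eps in H by (field; nra).
    nra. }
  assert (Hat : hnorm (G tau) <= bnd tau).
  { destruct (Req_dec tau 0) as [T0|T0].
    - rewrite T0, G0, hnorm_zero. unfold bnd. lra.
    - set (sg := Rmin sg0 tau).
      assert (Hs1 : 0 < sg) by (apply Rmin_glb_lt; lra).
      assert (Hs2 : sg <= sg0) by apply Rmin_l. assert (Hs3 : sg <= tau) by apply Rmin_r.
      assert (Hs4 : sg < d) by lra.
      destruct (Hloc sg (conj Hs1 Hs4)) as [_ Hb].
      specialize (Hb ltac:(lra)).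
      assert (Hb2 : hnorm (G (tau - sg)) <= bnd (tau - sg)).
      { destruct (Req_dec (tau - sg) 0) as [E|E]. rewrite E, G0, hnorm_zero. unfold bnd. lra.
        apply Hbelow. lra. }
      unfold bnd in *.
      assert (L * sg * (nh * nh) <= eps) by (apply Rle_trans with (L * sg0 * (nh*nh)); [|auto];
        apply Rmult_le_compat_r; [auto|]; apply Rmult_le_compat_l; lra).
      assert (L / 2 * (sg * sg) * (nh * nh) <= eps * sg / 2) by nra.
      nra. }
  assert (Htau : tau = 1).
  { apply NNPP. intros Hne.
    assert (Ht1 : tau < 1) by (destruct (Rle_lt_or_eq_dec _ _ Htau1); [auto|contradiction]).
    set (sg := Rmin sg0 (1 - tau)).
    assert (0 < sg) by (apply Rmin_glb_lt; lra).
    assert (sg <= sg0) by apply Rmin_l. assert (sg <= 1 - tau) by apply Rmin_r.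
    assert (tau + sg <= tau); [|lra].
    apply Hub. split. lra. intros s Hs.
    destruct (Rlt_le_dec s tau) as [Hlt|Hge]. apply Hbelow; lra.
    destruct (Req_dec s tau) as [Heq|Hneq]. subst s; auto.
    assert (Hst : tau < s) by (destruct (Rle_lt_or_eq_dec _ _ Hge); [auto|congruence]).
    assert (Hq1 : 0 < s - tau) by lra. assert (Hq2 : s - tau < d) by lra.
    destruct (Hloc (s - tau) (conj Hq1 Hq2)) as [Hf _].
    replace (tau + (s - tau)) with s in Hf by ring.
    assert (Hq3 : s <= 1) by lra.
    specialize (Hf Hq3). unfold bnd in *.
    assert (0 <= L * tau * (nh * nh)) by (apply Rmult_le_pos; nra).
    assert (0 <= (s - tau) * (L * tau * (nh * nh))) by (apply Rmult_le_pos; lra).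
    assert (0 <= L / 2 * ((s - tau) * (s-tau)) * (nh * nh)) by (apply Rmult_le_pos; [apply Rmult_le_pos|]; nra).
    nra. }
  rewrite Htau in Hat. unfold bnd in Hat. lra.
Qed.
End MVT.
Section Aux.
Context {X Y : HilbertSpace}.

Lemma opnorm_use (f : X -> Y) M w : (forall x, hnorm (f x) <= M * hnorm x) ->
  (forall a x, f (hscal a x) = hscal a (f x)) -> opnorm f <= w ->
  forall x, hnorm (f x) <= w * hnorm x.
Proof.
  intros HM Hh Hw x. pose proof (opnorm_pt f M HM Hh x). pose proof (hnorm_ge0 x).
  apply Rle_trans with (opnorm f * hnorm x); auto. apply Rmult_le_compat_r; auto.
Qed.

Lemma range_closed (A : X -> Y) : is_bounded_linear A -> closed_image A ->
  closed_subspace (fun y => exists x, y = A x).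
Proof.
  intros [HL _] Hc. repeat split.
  - exists hzero. rewrite lin_0; auto.
  - intros y z [a ->] [b ->]. exists (hadd a b). rewrite lin_add; auto.
  - intros s y [a ->]. exists (hscal s a). rewrite lin_scal; auto.
  - intros y Hy. apply Hc. intros eps He. destruct (Hy eps He) as [z [[x ->] Hz]]. exists x; auto.
Qed.

Lemma range_proj (A : X -> Y) : is_bounded_linear A -> closed_image A ->
  forall v, exists u, forall x, hinner (hsub v (A u)) (A x) = 0.
Proof.
  intros HA Hc v. destruct (projection _ v (range_closed A HA Hc)) as [p [[u ->] Hp]].
  exists u. intros x. apply Hp. exists x; auto.
Qed.

Lemma proj_adj (A : X -> Y) v u : is_bounded_linear A ->
  (forall x, hinner (hsub v (A u)) (A x) = 0) -> adjoint A v = adjoint A (A u).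
Proof.
  intros HA Hp. apply eq_by_inner. intros x. rewrite <- !adjoint_spec by auto.
  specialize (Hp x). rewrite hinner_subl in Hp. rewrite (hinner_sym (A x) v), (hinner_sym (A x) (A u)). lra.
Qed.

Lemma proj_norm (A : X -> Y) v u :
  (forall x, hinner (hsub v (A u)) (A x) = 0) ->
  hnorm (A u) <= hnorm v /\ hnorm (hsub v (A u)) <= hnorm v.
Proof.
  intros Hp. specialize (Hp u).
  pose proof (hnorm_sq_add (hsub v (A u)) (A u)). rewrite hsub_add_cancel, Hp in H.
  pose proof (hnorm_ge0 v). pose proof (hnorm_ge0 (A u)). pose proof (hnorm_ge0 (hsub v (A u))).
  split; nra.
Qed.

Lemma dagger_facts (A : X -> Y) : is_bounded_linear A -> injective_op A -> closed_image A ->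
  0 <= opnorm (dagger A) /\ forall h, hnorm h <= opnorm (dagger A) * hnorm (A h).
Proof.
  intros HA Hi Hc.
  destruct (bounded_below A HA Hi Hc) as [Cb [HCb Hbb]].
  pose proof (adjoint_spec A HA) as S.
  pose proof (adjoint_bl A HA) as [HadjL _].
  assert (Dsp : forall y, adjoint A (A (dagger A y)) = adjoint A y).
  { intros y. unfold dagger. apply epsilon_spec.
    destruct (range_proj A HA Hc y) as [u Hu]. exists u. symmetry. apply proj_adj; auto. }
  assert (Dbd : forall y, hnorm (dagger A y) <= Cb * hnorm y).
  { intros y. set (z := dagger A y).
    assert (E : hnorm (A z) * hnorm (A z) <= hnorm (A z) * hnorm y).
    { rewrite hnorm_sq, S. unfold z; rewrite Dsp, <- S. apply CS'. }
    pose proof (hnorm_ge0 (A z)). pose proof (hnorm_ge0 y).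
    assert (hnorm (A z) <= hnorm y).
    { destruct (Req_dec (hnorm (A z)) 0) as [E0|E0]. lra.
      apply Rmult_le_reg_l with (r := hnorm (A z)); lra. }
    specialize (Hbb z). nra. }
  assert (HB : forall y, hnorm y <= 1 -> hnorm (dagger A y) <= Cb).
  { intros y Hy. specialize (Dbd y). nra. }
  split. apply (opnorm_ge0 _ _ HB).
  assert (Dinv : forall h, dagger A (A h) = h).
  { intros h. set (z := dagger A (A h)).
    assert (E : A (hsub z h) = hzero).
    { apply hnorm_eq0. pose proof (hnorm_ge0 (A (hsub z h))).
      assert (hnorm (A (hsub z h)) * hnorm (A (hsub z h)) = 0).
      { rewrite hnorm_sq, S. rewrite (lin_sub A) by apply HA. rewrite (lin_sub (adjoint A)) by auto. unfold z. rewrite Dsp, hsub_diag, hinner_0r. reflexivity. }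
      nra. }
    rewrite lin_sub in E by apply HA. apply Hi.
    rewrite <- (hsub_add_cancel (A z) (A h)), E, hadd_0. reflexivity. }
  intros h.
  destruct (Req_dec (hnorm (A h)) 0) as [E0|E0].
  { apply hnorm_eq0 in E0. rewrite <- (lin_0 A) in E0 by apply HA. apply Hi in E0. subst h.
    rewrite hnorm_zero. pose proof (opnorm_ge0 _ _ HB). pose proof (hnorm_ge0 (A hzero)). nra. }
  pose proof (hnorm_ge0 (A h)). set (s := / hnorm (A h)).
  assert (Hs : s > 0) by (apply Rinv_0_lt_compat; lra).
  pose proof (opnorm_unit _ _ HB (A (hscal s h))) as U.
  rewrite Dinv, lin_scal, !hnorm_scal, Rabs_right in U by (auto; apply HA || lra).
  unfold s in U. rewrite Rinv_l in U by lra. specialize (U (Rle_refl 1)).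
  apply Rmult_le_compat_r with (r := hnorm (A h)) in U; [|lra].
  replace (/ hnorm (A h) * hnorm h * hnorm (A h)) with (hnorm h) in U by (field; lra). exact U.
Qed.
End Aux.

Lemma kappa_ok {X : HilbertSpace} (xs : X) (Rr : R) (O : X -> Prop) : Rr > 0 ->
  forall y, ball xs (kappa xs Rr O) y -> O y.
Proof.
  intros HR y Hy.
  set (T := fun t => 0 <= t < Rr /\ forall y, ball xs t y -> O y).
  assert (Hl : is_lub T (kappa xs Rr O)).
  { unfold kappa. apply epsilon_spec.
    destruct (completeness T) as [m Hm].
    { exists Rr. intros t [Ht _]. lra. }
    { exists 0. split. lra. intros z Hz. unfold ball in Hz. pose proof (hnorm_ge0 (hsub z xs)). lra. }
    exists m; exact Hm. }
  destruct Hl as [Hub Hlub]. unfold ball in Hy.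
  apply NNPP. intros Hn.
  assert (kappa xs Rr O <= hnorm (hsub y xs)); [|lra].
  apply Hlub. intros t [Ht Ht2]. apply Rnot_lt_le. intros Hlt. apply Hn. apply Ht2. exact Hlt.
Qed.
Section Step.
Context {X Y : HilbertSpace}.

Lemma bl_comp {Z : HilbertSpace} (A : X -> Y) (B : Y -> Z) : is_bounded_linear A -> is_bounded_linear B ->
  is_bounded_linear (fun x => B (A x)).
Proof.
  intros [HA [Ma HMa]] [HB [Mb HMb]]. split; [split|].
  - intros x y. rewrite !lin_add; auto.
  - intros a x. rewrite !lin_scal; auto.
  - exists (Rabs Mb * Rabs Ma). intros x. pose proof (bound_nonneg B Mb HMb (A x)).
    pose proof (bound_nonneg A Ma HMa x). pose proof (Rabs_pos Mb). nra.
Qed.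

Lemma bl_sub (A B : X -> Y) : is_bounded_linear A -> is_bounded_linear B ->
  is_bounded_linear (fun x => hsub (A x) (B x)).
Proof.
  intros [HA [Ma HMa]] [HB [Mb HMb]]. split; [split|].
  - intros x y. rewrite !lin_add by auto. vec_eq.
  - intros a x. rewrite !lin_scal by auto. vec_eq.
  - exists (Rabs Ma + Rabs Mb). intros x. pose proof (bound_nonneg B Mb HMb x).
    pose proof (bound_nonneg A Ma HMa x). pose proof (hnorm_sub_le (A x) (B x)). lra.
Qed.

Lemma bl_id : is_bounded_linear (fun x : X => x).
Proof. split; [split|]; auto. exists 1. intros; lra. Qed.

Lemma opnorm_use_bl (f : X -> Y) w : is_bounded_linear f -> opnorm f <= w ->
  forall x, hnorm (f x) <= w * hnorm x.
Proof.
  intros [HL [M HM]] Hw. apply (opnorm_use f M); auto. intros; apply lin_scal; auto.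
Qed.
End Step.

Lemma one_step {X Y : HilbertSpace} (O : X -> Prop) (F : X -> Y) (F' : X -> X -> Y)
  (HF : C1_on O F F') (Hcl : forall x, O x -> closed_image (F' x)) (xs : X)
  (K beta w1 w2 kap : R) (xk xk1 : X) (Bk Binv : X -> X) :
  K > 0 -> 0 <= beta -> 0 <= w1 -> (forall h, hnorm h <= beta * hnorm (F' xs h)) ->
  adjoint (F' xs) (F xs) = hzero -> O xs ->
  (forall y, ball xs kap y -> O y) ->
  (forall y z, ball xs kap y -> ball xs kap z ->
     opnorm (fun h => hsub (F' y h) (F' z h)) <= K * hnorm (hsub y z)) ->
  ball xs kap xk -> beta * K * hnorm (hsub xk xs) < 1 ->
  is_bounded_linear Binv -> (forall v, Binv (Bk v) = v) ->
  opnorm (fun h => Binv (adjoint (F' xk) (F' xk h))) <= w1 ->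
  opnorm (fun h => hsub (Binv (adjoint (F' xk) (F' xk h))) h) <= w2 ->
  Bk (hsub xk1 xk) = hopp (adjoint (F' xk) (F xk)) ->
  hnorm (hsub xk1 xs) <= w2 * hnorm (hsub xk xs)
    + w1 * (beta * (K * hnorm (hsub xk xs) * hnorm (hsub xk xs) / 2)) / (1 - beta * K * hnorm (hsub xk xs))
    + w1 * (beta * beta * hnorm (F xs) * K * hnorm (hsub xk xs)) / (1 - beta * K * hnorm (hsub xk xs)).
Proof.
  intros HK Hb0 Hw10 Hbb Hadj0 HOxs Hkap HLip Hxk Ht HBi HBB Hw1 Hw2 Hit.
  set (ev := hsub xk xs) in *. set (e := hnorm ev) in *.
  assert (He0 : 0 <= e) by apply hnorm_ge0.
  assert (Oxk : O xk) by (apply Hkap; auto).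
  destruct (proj1 HF xk Oxk) as [HA _].
  destruct (proj1 HF xs HOxs) as [HAs _].
  pose proof (adjoint_spec (F' xk) HA) as S.
  pose proof (adjoint_bl (F' xk) HA) as HAdj.
  assert (Hxsb : ball xs kap xs) by (unfold ball; rewrite hsub_diag, hnorm_zero; unfold ball in Hxk; fold ev e in Hxk; lra).
  assert (HE : forall g, hnorm (hsub (F' xk g) (F' xs g)) <= K * e * hnorm g).
  { apply (opnorm_use_bl (fun g => hsub (F' xk g) (F' xs g))). apply bl_sub; auto.
    apply HLip; auto. }
  set (den := 1 - beta * K * e).
  assert (Hden : den > 0) by (unfold den; lra).
  assert (Hbelow : forall g, den * hnorm g <= beta * hnorm (F' xk g)).
  { intros g. pose proof (Hbb g). pose proof (hnorm_rev (F' xs g) (F' xk g)).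
    rewrite hnorm_sub_sym in H0. pose proof (HE g). pose proof (hnorm_ge0 g). unfold den.
    assert (beta * hnorm (F' xs g) <= beta * (hnorm (F' xk g) + K * e * hnorm g)) by (apply Rmult_le_compat_l; lra).
    nra. }
  set (M := fun g => Binv (adjoint (F' xk) (F' xk g))).
  assert (HMbl : is_bounded_linear M).
  { apply (bl_comp (fun g => adjoint (F' xk) (F' xk g)) Binv); [apply (bl_comp (F' xk) (adjoint (F' xk)))|]; auto. }
  assert (HM1 : forall g, hnorm (M g) <= w1 * hnorm g) by (apply opnorm_use_bl; auto).
  assert (HM2 : forall g, hnorm (hsub (M g) g) <= w2 * hnorm g).
  { apply (opnorm_use_bl (fun g => hsub (M g) g)). apply bl_sub; auto. apply bl_id. auto. }
  set (h := hsub xs xk).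
  assert (Hh : hnorm h = e) by (unfold h, e, ev; apply hnorm_sub_sym).
  set (D := hsub (hsub (F xs) (F xk)) (F' xk h)).
  assert (HD : hnorm D <= K / 2 * e * e).
  { rewrite <- Hh. unfold D. replace (F xs) with (F (hadd xk h)) by (unfold h; f_equal; vec_eq).
    assert (Hz : forall s, 0 <= s <= 1 -> ball xs kap (hadd xk (hscal s h))).
    { intros s Hs. unfold ball. replace (hsub (hadd xk (hscal s h)) xs) with (hscal (1 - s) ev) by (unfold ev, h; vec_eq).
      rewrite hnorm_scal, Rabs_right by lra. fold e. unfold ball in Hxk. fold ev e in Hxk. nra. }
    apply mvt. lra.
    - intros s Hs. destruct (proj1 HF _ (Hkap _ (Hz s Hs))) as [[Hl _] Hd]. auto.
    - intros s Hs. pose proof (HLip _ _ (Hz s Hs) Hxk) as HL.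
      replace (hsub (hadd xk (hscal s h)) xk) with (hscal s h) in HL by vec_eq.
      rewrite hnorm_scal, Rabs_right in HL by lra.
      destruct (proj1 HF _ (Hkap _ (Hz s Hs))) as [Hbl _].
      pose proof (opnorm_use_bl (fun g => hsub (F' (hadd xk (hscal s h)) g) (F' xk g)) _ (bl_sub _ _ Hbl HA) HL h).
      simpl in H. rewrite Hh in *. lra. }
  destruct (range_proj (F' xk) HA (Hcl xk Oxk) (F xs)) as [u1 Hu1].
  destruct (range_proj (F' xk) HA (Hcl xk Oxk) D) as [u2 Hu2].
  assert (P1 : Binv (adjoint (F' xk) (F xs)) = M u1) by (unfold M; rewrite (proj_adj (F' xk) (F xs) u1); auto).
  assert (P2 : Binv (adjoint (F' xk) D) = M u2) by (unfold M; rewrite (proj_adj (F' xk) D u2); auto).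
  assert (Hd : hsub xk1 xk = hopp (Binv (adjoint (F' xk) (F xk)))).
  { rewrite <- (HBB (hsub xk1 xk)), Hit, lin_opp; auto. apply HBi. }
  assert (EF : F xk = hsub (hadd (F xs) (F' xk ev)) D).
  { unfold D, ev, h. rewrite !(lin_sub (F' xk)) by apply HA. vec_eq. }
  assert (Ee : hsub xk1 xs = hadd (hsub (hsub ev (M ev)) (M u1)) (M u2)).
  { rewrite (hsub_chain xk1 xk xs), Hd, EF. fold ev.
    rewrite (lin_sub (adjoint (F' xk))), (lin_add (adjoint (F' xk))) by apply HAdj.
    rewrite (lin_sub Binv), (lin_add Binv) by apply HBi.
    rewrite P1, P2. unfold M. vec_eq. }
  rewrite Ee.
  pose proof (hnorm_triangle (hsub (hsub ev (M ev)) (M u1)) (M u2)).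
  pose proof (hnorm_sub_le (hsub ev (M ev)) (M u1)).
  assert (T1 : hnorm (hsub ev (M ev)) <= w2 * e) by (rewrite hnorm_sub_sym; apply HM2).
  assert (U2 : hnorm u2 <= beta * (K * e * e / 2) / den).
  { destruct (proj_norm (F' xk) D u2 Hu2) as [Ha _].
    pose proof (Hbelow u2).
    assert (den * hnorm u2 <= beta * (K * e * e / 2)).
    { apply Rle_trans with (beta * hnorm (F' xk u2)). auto.
      apply Rmult_le_compat_l. auto. lra. }
    apply Rmult_le_reg_l with (r := den). auto.
    replace (den * (beta * (K * e * e / 2) / den)) with (beta * (K * e * e / 2)) by (field; lra). auto. }
  assert (U1 : hnorm u1 <= beta * beta * hnorm (F xs) * K * e / den).
  { set (v := F xs) in *. set (p := F' xk u1). set (q := F' xs u1).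
    set (n := hnorm u1). set (a := hnorm p). set (c := hnorm v).
    assert (Hq0 : hinner q v = 0).
    { unfold q. rewrite (adjoint_spec (F' xs) HAs), Hadj0, hinner_0r. reflexivity. }
    assert (Hp0 : hinner (hsub v p) p = 0) by apply Hu1.
    destruct (proj_norm (F' xk) v u1 Hu1) as [_ Hsv]. fold p c in Hsv.
    assert (Id : hnorm q * hnorm q = - (a * a) + hnorm (hsub p q) * hnorm (hsub p q) + 2 * hinner (hsub v p) (hsub p q)).
    { unfold a. rewrite !hnorm_sq. rewrite hinner_subl in Hp0.
      rewrite !hinner_subl, !hinner_subr, ?hinner_subl.
      pose proof (hinner_sym p q). pose proof (hinner_sym v p). pose proof (hinner_sym v q). pose proof (hinner_sym p v).
      lra. }
    pose proof (HE u1) as HEu. fold p q n in HEu.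
    pose proof (CS (hsub v p) (hsub p q)) as Hcs. pose proof (Rle_abs (hinner (hsub v p) (hsub p q))).
    pose proof (hnorm_ge0 (hsub p q)). pose proof (hnorm_ge0 (hsub v p)).
    assert (Hn0 : 0 <= n) by apply hnorm_ge0. assert (Ha0 : 0 <= a) by apply hnorm_ge0.
    assert (Hc0 : 0 <= c) by apply hnorm_ge0.
    assert (Hin : hinner (hsub v p) (hsub p q) <= c * (K * e * n)).
    { apply Rle_trans with (hnorm (hsub v p) * hnorm (hsub p q)). lra.
      apply Rmult_le_compat; auto. }
    assert (HEu2 : hnorm (hsub p q) * hnorm (hsub p q) <= (K * e * n) * (K * e * n)) by nra.
    assert (Hq2 : hnorm q * hnorm q <= - (a * a) + (K * e * n) * (K * e * n) + 2 * c * (K * e * n)) by lra.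
    pose proof (Hbb u1) as Hn1. fold q n in Hn1.
    assert (Hn2 : n * n <= beta * beta * (hnorm q * hnorm q)) by (pose proof (hnorm_ge0 q); nra).
    pose proof (Hbelow u1) as Hb1. fold p n a in Hb1.
    assert (Hb2 : den * n * (den * n) <= beta * a * (beta * a)) by (assert (0 <= den * n) by nra; nra).
    assert (Hfin : n * n * (2 * den) <= 2 * (beta * beta * c * K * e) * n).
    { assert (beta * beta * (hnorm q * hnorm q) <= beta * beta * (- (a * a) + (K * e * n) * (K * e * n) + 2 * c * (K * e * n)))
        by (apply Rmult_le_compat_l; nra).
      unfold den in *. nra. }
    destruct (Req_dec n 0) as [N0|N0].
    - rewrite N0. apply Rle_mult_inv_pos; [|auto]. 
      repeat apply Rmult_le_pos; auto; lra.
    - assert (n * den <= beta * beta * c * K * e) by (apply Rmult_le_reg_l with (r := 2 * n); nra).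
      apply Rmult_le_reg_l with (r := den). auto.
      replace (den * (beta * beta * c * K * e / den)) with (beta * beta * c * K * e) by (field; lra). lra. }
  pose proof (HM1 u1). pose proof (HM1 u2).
  assert (w1 * hnorm u1 <= w1 * (beta * beta * hnorm (F xs) * K * e / den)) by (apply Rmult_le_compat_l; auto).
  assert (w1 * hnorm u2 <= w1 * (beta * (K * e * e / 2) / den)) by (apply Rmult_le_compat_l; auto).
  unfold Rdiv in *. rewrite !Rmult_assoc in *. lra.
Qed.
Theorem mainTheorem12 (X Y : HilbertSpace) (O : X -> Prop) (F : X -> Y)
  (F' : X -> X -> Y)
  (HO : is_open O) (HF : C1_on O F F')
  (Hcl : forall x, O x -> closed_image (F' x))
  (xs : X) (Rr K w1 w2 : R) (x : nat -> X) (B Binv : nat -> X -> X) :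
  O xs -> Rr > 0 ->
  adjoint (F' xs) (F xs) = hzero ->
  injective_op (F' xs) ->
  K > 0 ->
  let c := hnorm (F xs) in
  let beta := opnorm (dagger (F' xs)) in
  let kap := kappa xs Rr O in
  let alpha := sqrt 2 * c * beta ^ 2 * K in
  alpha < 1 ->
  (forall y z, ball xs kap y -> ball xs kap z ->
     opnorm (fun h => hsub (F' y h) (F' z h)) <= K * hnorm (hsub y z)) ->
  0 <= w2 -> w2 < w1 -> w1 * alpha + w2 < 1 ->
  let r := Rmin kap ((2 * (1 - w2) - 2 * sqrt 2 * c * K * beta ^ 2 * w1)
                      / (beta * K * (2 + w1 - 2 * w2))) in
  ball xs r (x 0%nat) -> x 0%nat <> xs ->
  (forall k, is_bounded_linear (B k) /\ is_bounded_linear (Binv k) /\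
     (forall v, B k (Binv k v) = v) /\ (forall v, Binv k (B k v) = v)) ->
  (forall k, opnorm (fun h => Binv k (adjoint (F' (x k)) (F' (x k) h))) <= w1) ->
  (forall k, opnorm (fun h => hsub (Binv k (adjoint (F' (x k)) (F' (x k) h))) h) <= w2) ->
  (forall k, B k (hsub (x (S k)) (x k)) = hopp (adjoint (F' (x k)) (F (x k)))) ->
  (forall k, O (x k) /\ ball xs r (x k)) /\
  converges_to x xs /\
  (forall k,
     hnorm (hsub (x (S k)) xs) <=
       beta * w1 * K / (2 * (1 - beta * K * hnorm (hsub (x 0%nat) xs)))
         * hnorm (hsub (x k) xs) ^ 2
     + (w1 * sqrt 2 * c * beta ^ 2 * K / (1 - beta * K * hnorm (hsub (x 0%nat) xs)) + w2)
         * hnorm (hsub (x k) xs)).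
Proof.
  intros HOxs HRr Hadj0 Hinj HK c beta kap alpha Halpha HLip Hw20 Hw12 Hwa r Hx0 Hx0ne HB Hw1 Hw2 Hit.
  assert (HAs : is_bounded_linear (F' xs)) by apply (proj1 HF xs HOxs).
  destruct (dagger_facts (F' xs) HAs Hinj (Hcl xs HOxs)) as [Hb0 Hbb]. fold beta in Hb0, Hbb.
  assert (Hkapb : forall y, ball xs kap y -> O y) by (apply kappa_ok; auto).
  assert (Hc0 : 0 <= c) by apply hnorm_ge0.
  assert (Hs2 : 1 <= sqrt 2) by (rewrite <- sqrt_1; apply sqrt_le_1_alt; lra).
  assert (Eb2 : beta ^ 2 = beta * beta) by ring.
  assert (Ha0 : 0 <= alpha) by (unfold alpha; rewrite Eb2; repeat apply Rmult_le_pos; lra).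
  set (e0 := hnorm (hsub (x 0%nat) xs)) in *.
  assert (He0 : 0 <= e0) by apply hnorm_ge0.
  unfold ball in Hx0. fold e0 in Hx0.
  set (num := 2 * (1 - w2) - 2 * sqrt 2 * c * K * beta ^ 2 * w1) in *.
  set (Dd := 2 + w1 - 2 * w2) in *.
  assert (Hwa0 : 0 <= w1 * alpha) by (apply Rmult_le_pos; lra).
  assert (HDd : Dd > 0) by (unfold Dd; lra).
  assert (Enum : num = 2 * (1 - w2 - w1 * alpha)) by (unfold num, alpha; ring).
  assert (He0k : e0 < kap) by (eapply Rlt_le_trans; [apply Hx0|apply Rmin_l]).
  assert (He0n : e0 < num / (beta * K * Dd)) by (eapply Rlt_le_trans; [apply Hx0|apply Rmin_r]).
  assert (Hbp : beta > 0).
  { destruct (Req_dec beta 0) as [E|E]; [|lra].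
    rewrite E in He0n. rewrite !Rmult_0_l in He0n. unfold Rdiv in He0n. rewrite Rinv_0, Rmult_0_r in He0n. lra. }
  set (t0 := beta * K * e0).
  assert (Ht0n : t0 * Dd < num).
  { unfold t0. apply Rmult_lt_compat_r with (r := beta * K * Dd) in He0n.
    replace (num / (beta * K * Dd) * (beta * K * Dd)) with num in He0n by (field; split; lra). nra.
    apply Rmult_lt_0_compat; [apply Rmult_lt_0_compat|]; lra. }
  assert (Ht0 : 0 <= t0) by (unfold t0; apply Rmult_le_pos; [apply Rmult_le_pos|]; lra).
  assert (Ht01 : t0 < 1) by (unfold Dd in Ht0n; nra).
  set (q := beta * w1 * K / (2 * (1 - t0)) * e0 + (w1 * sqrt 2 * c * beta ^ 2 * K / (1 - t0) + w2)).
  assert (Hq0 : 0 <= q).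
  { unfold q. rewrite Eb2. apply Rplus_le_le_0_compat; [|apply Rplus_le_le_0_compat; [|lra]];
    [apply Rmult_le_pos; [|lra]|]; unfold Rdiv; apply Rmult_le_pos;
    try (apply Rlt_le, Rinv_0_lt_compat; lra); repeat apply Rmult_le_pos; lra. }
  assert (Hq1 : q < 1).
  { unfold q.
    assert (E1 : beta * w1 * K / (2 * (1 - t0)) * e0 = w1 * t0 / (2 * (1 - t0))).
    { assert (Hn0 : 1 - t0 <> 0) by lra. unfold t0 in *. field. auto. }
    assert (E2 : w1 * sqrt 2 * c * beta ^ 2 * K = w1 * alpha) by (unfold alpha; ring).
    rewrite E1, E2.
    apply Rmult_lt_reg_r with (r := 2 * (1 - t0)). lra.
    replace ((w1 * t0 / (2 * (1 - t0)) + (w1 * alpha / (1 - t0) + w2)) * (2 * (1 - t0)))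
      with (w1 * t0 + 2 * w1 * alpha + 2 * w2 * (1 - t0)) by (field; lra).
    rewrite Enum in Ht0n. unfold Dd in Ht0n. lra. }
  assert (Step : forall k, hnorm (hsub (x k) xs) <= e0 ->
     hnorm (hsub (x (S k)) xs) <=
       beta * w1 * K / (2 * (1 - beta * K * e0)) * hnorm (hsub (x k) xs) ^ 2
     + (w1 * sqrt 2 * c * beta ^ 2 * K / (1 - beta * K * e0) + w2) * hnorm (hsub (x k) xs)).
  { intros k Hk. set (e := hnorm (hsub (x k) xs)) in *.
    assert (He : 0 <= e) by apply hnorm_ge0.
    destruct (HB k) as [_ [HBi [_ HBB]]].
    assert (Hbk : beta * K * e <= t0) by (unfold t0; apply Rmult_le_compat_l; [apply Rmult_le_pos|]; lra).
    pose proof (one_step O F F' HF Hcl xs K beta w1 w2 kap (x k) (x (S k)) (B k) (Binv k)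
      HK Hb0 ltac:(lra) Hbb Hadj0 HOxs Hkapb HLip ltac:(unfold ball; fold e; lra) ltac:(fold e; lra)
      HBi HBB (Hw1 k) (Hw2 k) (Hit k)) as H1.
    fold e c in H1. fold t0.
    set (dk := 1 - beta * K * e) in *.
    assert (Hdk : 1 - t0 <= dk) by (unfold dk; lra).
    assert (Hinv : / dk <= / (1 - t0)) by (apply Rinv_le_contravar; lra).
    assert (T1 : w1 * (beta * (K * e * e / 2)) / dk <= beta * w1 * K / (2 * (1 - t0)) * e ^ 2).
    { unfold Rdiv. replace (beta * w1 * K * / (2 * (1 - t0)) * e ^ 2) with (w1 * (beta * (K * e * e / 2)) * / (1 - t0))
        by (field; lra).
      apply Rmult_le_compat_l; auto. repeat apply Rmult_le_pos; lra. }
    assert (T2 : w1 * (beta * beta * c * K * e) / dk <= w1 * sqrt 2 * c * beta ^ 2 * K / (1 - t0) * e).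
    { unfold Rdiv. rewrite Eb2.
      apply Rle_trans with (w1 * (beta * beta * c * K * e) * / (1 - t0)).
      apply Rmult_le_compat_l; auto. repeat apply Rmult_le_pos; lra.
      replace (w1 * sqrt 2 * c * (beta * beta) * K * / (1 - t0) * e) with
        (w1 * (beta * beta * c * K * e) * / (1 - t0) * sqrt 2) by ring.
      assert (0 <= w1 * (beta * beta * c * K * e) * / (1 - t0)).
      { apply Rmult_le_pos. repeat apply Rmult_le_pos; lra. apply Rlt_le, Rinv_0_lt_compat; lra. }
      nra. }
    lra. }
  assert (Hbnd : forall k, hnorm (hsub (x k) xs) <= e0 ->
     beta * w1 * K / (2 * (1 - beta * K * e0)) * hnorm (hsub (x k) xs) ^ 2
     + (w1 * sqrt 2 * c * beta ^ 2 * K / (1 - beta * K * e0) + w2) * hnorm (hsub (x k) xs)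
     <= q * hnorm (hsub (x k) xs)).
  { intros k Hk. set (e := hnorm (hsub (x k) xs)) in *. assert (He : 0 <= e) by apply hnorm_ge0.
    unfold q. fold t0.
    assert (0 <= beta * w1 * K / (2 * (1 - t0))).
    { unfold Rdiv. apply Rmult_le_pos. repeat apply Rmult_le_pos; lra. apply Rlt_le, Rinv_0_lt_compat; lra. }
    assert (beta * w1 * K / (2 * (1 - t0)) * e <= beta * w1 * K / (2 * (1 - t0)) * e0) by (apply Rmult_le_compat_l; lra).
    replace (e ^ 2) with (e * e) by ring. nra. }
  assert (Ind : forall k, hnorm (hsub (x k) xs) <= q ^ k * e0).
  { induction k. simpl. fold e0. lra.
    assert (Hqk : q ^ k <= 1) by (rewrite <- (pow1 k); apply pow_incr; lra).
    assert (Hk : hnorm (hsub (x k) xs) <= e0) by nra.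
    pose proof (Step k Hk). pose proof (Hbnd k Hk). simpl.
    assert (q * hnorm (hsub (x k) xs) <= q * (q ^ k * e0)) by (apply Rmult_le_compat_l; lra). lra. }
  assert (Hle : forall k, hnorm (hsub (x k) xs) <= e0).
  { intros k. specialize (Ind k). assert (q ^ k <= 1) by (rewrite <- (pow1 k); apply pow_incr; lra).
    assert (0 <= q ^ k) by (apply pow_le; lra). nra. }
  split; [|split].
  - intros k. assert (hnorm (hsub (x k) xs) < r) by (pose proof (Hle k); lra).
    split; [apply Hkapb; unfold ball|unfold ball; auto].
    eapply Rlt_le_trans. apply H. apply Rmin_l.
  - intros eps Heps.
    destruct (pow_lt_1_zero q ltac:(rewrite Rabs_right; lra) (eps / (e0 + 1))) as [N HN].
    apply Rdiv_lt_0_compat; lra.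
    exists N. intros n Hn. specialize (HN n Hn). specialize (Ind n).
    assert (0 <= q ^ n) by (apply pow_le; lra).
    rewrite Rabs_right in HN by lra.
    apply Rmult_lt_compat_r with (r := e0 + 1) in HN; [|lra].
    replace (eps / (e0 + 1) * (e0 + 1)) with eps in HN by (field; lra). nra.
  - intros k. apply Step, Hle.
Qed.
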